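(* Let $c\le 7$ be a nonnegative integer and let $C\subset V(\tfrac12 H^{0}_{24})$ be such that $\chi_C$ is a perfect coloring of $\tfrac12 H^{0}_{24}$ with parameters $((20+c,\,256-c)(c,\,276-c))$. Then $C$ is a union of spheres.
   Context: $E^{24}$ is the set of binary words of length $24$ with Hamming distance. $\tfrac12 H^{0}_{24}$ is the graph on even-weight words of $E^{24}$, adjacent iff at Hamming distance exactly $2$ (degree $276$). A sphere is a set $S\subset V(\tfrac12 H^{0}_{24})$ consisting of all $24$ words at Hamming distance $1$ from some odd-weight word (its center). For a set $C$ with $\emptyset\ne C\subsetneq V$, $\chi_C$ is a perfect coloring with parameters $((a,b)(c,d))$ if every vertex of $C$ has exactly $a$ neighbours in $C$ and $b$ outside, and every vertex outside $C$ has exactly $c$ neighbours in $C$ and $d$ outside. *)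

(* Defs.v *)
From mathcomp Require Import all_boot.
Set Implicit Arguments. Unset Strict Implicit. Unset Printing Implicit Defensive.

Definition word (n : nat) := {ffun 'I_n -> bool}.

Definition wt n (u : word n) : nat := #|[set i | u i]|.
Definition hdist n (u v : word n) : nat := #|[set i | u i != v i]|.

Definition halfcube_V n : {set word n} := [set u | ~~ odd (wt u)].

Definition halfcube_adj n : rel (word n) := fun u v => hdist u v == 2.

Definition sphere n (z : word n) : {set word n} := [set u | hdist u z == 1].

Definition perfect_coloring (T : finType) (V : {set T}) (adj : rel T)
    (C : {set T}) (a b c d : nat) : Prop :=
  [/\ C != set0, C \proper V,
      (forall x, x \in C ->
         #|[set y in V | adj x y && (y \in C)]| = a /\
         #|[set y in V | adj x y && (y \notin C)]| = b) &
      (forall x, x \in V :\: C ->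
         #|[set y in V | adj x y && (y \in C)]| = c /\
         #|[set y in V | adj x y && (y \notin C)]| = d)].

Definition union_of_spheres n (C : {set word n}) : Prop :=
  exists Z : {set word n}, (forall z, z \in Z -> odd (wt z)) /\
    C = \bigcup_(z in Z) sphere z.

(* Main.v *)
Require Import Defs.
From mathcomp Require Import all_boot.
From Stdlib Require Import Lia ArithRing.
Set Implicit Arguments. Unset Strict Implicit. Unset Printing Implicit Defensive.

Ltac nlia := repeat match goal with
  | H : is_true (_ <= _) |- _ => move/leP: H => H
  | H : is_true (_ < _) |- _ => move/ltP: H => H
  | H : is_true (_ == _) |- _ => move/eqP: H => H
  end; try apply/leP;
  unfold addn, subn, muln in *; lia.

Definition fl (u : word 24) (k : 'I_24) : word 24 := [ffun m => u m (+) (m == k)].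

Lemma flE u k m : fl u k m = u m (+) (m == k).
Proof. by rewrite ffunE. Qed.

Lemma flK u k : fl (fl u k) k = u.
Proof. by apply/ffunP=> m; rewrite !flE -addbA addbb addbF. Qed.

Lemma flC u a b : fl (fl u a) b = fl (fl u b) a.
Proof. by apply/ffunP=> m; rewrite !flE -!addbA (addbC (m == b)). Qed.

Lemma wt_fl u k : odd (wt (fl u k)) = ~~ odd (wt u).
Proof.
rewrite /wt (cardsD1 k [set i | u i]) (cardsD1 k [set i | fl u k i]).
have -> : [set i | fl u k i] :\ k = [set i | u i] :\ k.
  by apply/setP=> m; rewrite !inE flE; case: (eqVneq m k) => //= _; rewrite addbF.
by rewrite !inE flE eqxx addbT !oddD; case: (u k); case: (odd #|_|).
Qed.

Lemma sum_eq1 (F : 'I_24 -> nat) j : \sum_q ((q == j) * F q) = F j.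
Proof.
rewrite (bigD1 j) //= eqxx mul1n big1 ?addn0 //.
move=> q qj; by rewrite (negbTE qj).
Qed.

Lemma sum1 j : \sum_(q : 'I_24) ((q == j) : nat) = 1.
Proof. rewrite -[RHS](sum_eq1 (fun _ => 1) j). by apply: eq_bigr=> q _; rewrite muln1. Qed.

Lemma L1 (F : 'I_24 -> nat) a :
  \sum_(p : 'I_24) \sum_(q : 'I_24) ((p == a) * F q) = \sum_q F q.
Proof.
rewrite exchange_big /=; apply: eq_bigr => q _.
by rewrite (sum_eq1 (fun _ => F q)).
Qed.

Lemma L2 (F : 'I_24 -> nat) a :
  \sum_(p : 'I_24) \sum_(q : 'I_24) ((q == a) * F p) = \sum_p F p.
Proof.
apply: eq_bigr => p _.
by rewrite (sum_eq1 (fun _ => F p)).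
Qed.

Lemma cnt i : \sum_(j : 'I_24) ((j != i) : nat) = 23.
Proof.
have : \sum_(j : 'I_24) ((j == i) + (j != i)) = 24.
  transitivity (\sum_(j : 'I_24) 1); last by rewrite sum_nat_const card_ord.
  by apply: eq_bigr => j _; case: (j == i).
by rewrite big_split /= sum1 => /eqP; rewrite -[24]/(1 + 23) eqn_add2l => /eqP.
Qed.

Lemma K2 (u y : word 24) :
  \sum_(p : 'I_24) \sum_(q : 'I_24) ((p != q) && (fl (fl u p) q == y) : nat)
  = 2 * (hdist u y == 2).
Proof.
set D := [set k | u k != y k].
have E : forall p q, p != q -> (fl (fl u p) q == y) = (D == [set p; q]).
  move=> p q pq.
  have hpq : forall m : 'I_24, ~~ ((m == p) && (m == q)).
    by move=> m; apply/andP=> [[/eqP-> /eqP]]; apply/eqP.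
  apply/eqP/eqP => [H|H].
    apply/setP=> m; rewrite !inE -H !flE.
    by move: (hpq m); case: (m == p); case: (m == q); case: (u m).
  apply/ffunP=> m; rewrite !flE.
  have : (m \in D) = (m \in [set p; q]) by rewrite H.
  rewrite !inE.
  by move: (hpq m); case: (m == p); case: (m == q); case: (u m); case: (y m).
have hd : hdist u y = #|D| by [].
rewrite hd.
case: (boolP (#|D| == 2)) => [/cards2P [a [b [ab DE]]]|nD].
  have S : forall p q, p != q -> ([set a; b] == [set p; q]) =
      ((p == a) && (q == b)) || ((p == b) && (q == a)).
    move=> p q pq; apply/eqP/idP => [H|].
      have pin : p \in [set a; b] by rewrite H !inE eqxx.
      have qin : q \in [set a; b] by rewrite H !inE eqxx orbT.
      move: pin qin pq; rewrite !inE.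
      by case/orP => /eqP->; case/orP=>/eqP->; rewrite ?eqxx //= ?orbT.
    by case/orP=>/andP[/eqP-> /eqP->] //; rewrite setUC.
  have P : forall p q, ((p != q) && (fl (fl u p) q == y) : nat)
      = (p == a) * (q == b) + (p == b) * (q == a).
    move=> p q.
    have nab : ~~ ((p == a) && (p == b)).
      by apply/andP=> [[/eqP pa /eqP pb]]; rewrite -pa -pb eqxx in ab.
    case: (eqVneq p q) => [<-|pq] /=.
      by move: nab; case: (p == a); case: (p == b).
    rewrite E // DE S //.
    by move: nab; case: (p == a); case: (p == b); case: (q == a); case: (q == b).
  under eq_bigr => p _ do under eq_bigr => q _ do rewrite P.
  under eq_bigr => p _ do rewrite big_split /=.
  rewrite big_split /=.
  rewrite (L1 (fun q => (q == b) : nat)) (L1 (fun q => (q == a) : nat)) !sum1.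
  by [].
rewrite muln0.
apply: big1 => p _; apply: big1 => q _.
case: (eqVneq p q) => [//|pq] /=; rewrite E //.
case: (eqVneq D [set p; q]) => [H|//].
by move: nD; rewrite H cards2 pq.
Qed.

Ltac nring := repeat match goal with H : _ |- _ => revert H end;
  rewrite -?plusE -?multE -?minusE; intros; ring.

Lemma cntk i k : \sum_(j : 'I_24) ((j != i) * k) = 23 * k.
Proof. by rewrite -big_distrl /= cnt. Qed.

Lemma split_i (F : 'I_24 -> nat) i :
  \sum_j F j = F i + \sum_(j : 'I_24) ((j != i) * F j).
Proof.
rewrite -[F i](sum_eq1 F i) -big_split /=; apply: eq_bigr => j _.
by case: (eqVneq j i) => _; rewrite /= ?mul1n ?mul0n ?addn0.
Qed.

Lemma sumMl k (F : 'I_24 -> nat) : \sum_j (k * F j) = k * \sum_j F j.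
Proof. by rewrite big_distrr. Qed.

Lemma sum2 (A B : 'I_24 -> nat) : \sum_j (A j + B j) = \sum_j A j + \sum_j B j.
Proof. by rewrite big_split. Qed.

Lemma sum4 (A B D E : 'I_24 -> nat) :
  \sum_j (A j + B j + D j + E j) = \sum_j A j + \sum_j B j + \sum_j D j + \sum_j E j.
Proof. by rewrite !sum2. Qed.

Lemma swap12 (F : 'I_24 -> 'I_24 -> 'I_24 -> nat) :
  \sum_j \sum_p \sum_q F j p q = \sum_p \sum_j \sum_q F j p q.
Proof. by rewrite exchange_big. Qed.

Lemma rev3 (F : 'I_24 -> 'I_24 -> 'I_24 -> nat) :
  \sum_j \sum_p \sum_q F j p q = \sum_q \sum_p \sum_j F j p q.
Proof.
transitivity (\sum_j \sum_q \sum_p F j p q).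
  by apply: eq_bigr => j _; rewrite exchange_big.
rewrite exchange_big; apply: eq_bigr => q _; by rewrite exchange_big.
Qed.

Lemma sum3_2 (A B : 'I_24 -> 'I_24 -> 'I_24 -> nat) :
  \sum_j \sum_p \sum_q (A j p q + B j p q) =
  \sum_j \sum_p \sum_q A j p q + \sum_j \sum_p \sum_q B j p q.
Proof.
rewrite -sum2; apply: eq_bigr => j _; rewrite -sum2; apply: eq_bigr => p _.
by rewrite sum2.
Qed.

Lemma sum3_le (A B : 'I_24 -> 'I_24 -> 'I_24 -> nat) :
  (forall j p q, A j p q <= B j p q) ->
  \sum_j \sum_p \sum_q A j p q <= \sum_j \sum_p \sum_q B j p q.
Proof.
move=> H; apply: leq_sum => j _; apply: leq_sum => p _; apply: leq_sum => q _; exact: H.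
Qed.

Lemma sumMr k (F : 'I_24 -> nat) : \sum_j (F j * k) = (\sum_j F j) * k.
Proof. by rewrite big_distrl. Qed.

Section S.
Variable c : nat.
Variable C : {set word 24}.
Hypothesis CV : C \subset halfcube_V 24.
Hypothesis HE : forall u, u \in halfcube_V 24 ->
  #|[set y in halfcube_V 24 | halfcube_adj u y && (y \in C)]| = 20 * (u \in C) + c.

Lemma NB u : u \in halfcube_V 24 ->
  \sum_(p : 'I_24) \sum_(q : 'I_24) ((p != q) && (fl (fl u p) q \in C) : nat)
  = 2 * (20 * (u \in C) + c).
Proof.
move=> uV; rewrite -HE //.
have cardS : #|[set y in halfcube_V 24 | halfcube_adj u y && (y \in C)]|
    = \sum_y ((hdist u y == 2) * (y \in C)).
  rewrite -sum1_card big_mkcond /=; apply: eq_bigr => y _; rewrite !inE /halfcube_adj.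
  case: (boolP (y \in C)) => yC.
    by move: (subsetP CV y yC); rewrite inE => ->; case: (_ == 2).
  by rewrite !andbF muln0.
rewrite cardS.
have step : forall p q, ((p != q) && (fl (fl u p) q \in C) : nat)
    = \sum_y (((p != q) && (fl (fl u p) q == y)) * (y \in C)).
  move=> p q; rewrite (bigD1 (fl (fl u p) q)) //= eqxx andbT big1 ?addn0.
    by rewrite mulnb.
  by move=> y yne; rewrite [_ == y]eq_sym (negbTE yne) andbF.
transitivity (\sum_(p : 'I_24) \sum_(q : 'I_24) \sum_y
   (((p != q) && (fl (fl u p) q == y)) * (y \in C))).
  by apply: eq_bigr => p _; apply: eq_bigr => q _; exact: step.
transitivity (\sum_(p : 'I_24) \sum_y \sum_(q : 'I_24)
   (((p != q) && (fl (fl u p) q == y)) * (y \in C))).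
  by apply: eq_bigr => p _; rewrite exchange_big.
rewrite exchange_big /= big_distrr /=; apply: eq_bigr => y _.
rewrite mulnA -(K2 u y) big_distrl /=; apply: eq_bigr => p _.
by rewrite big_distrl.
Qed.
End S.

Lemma ar1 c D S T : 3 <= c -> c <= 6 -> T + 126 = 42 * c -> S <= T -> D + 1 <= c ->
  (c = 3 -> 1 <= D) -> (c = 4 -> 2 <= D) -> (5 <= c -> 3 <= D) ->
  D * (2 * c + 42) <= S + D * (2 * D + 2 * (c - 1)) ->
  3 * S <= 2 * T + D * (D - 1) * D -> False.
Proof.
move=> h1 h2 h3 h4 h5 h6 h7 h8 h9 h10.
have : c = 3 \/ c = 4 \/ c = 5 \/ c = 6 by nlia.
have : D = 0 \/ D = 1 \/ D = 2 \/ D = 3 \/ D = 4 \/ D = 5 by nlia.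
case=> [F|[F|[F|[F|[F|F]]]]]; case=> [E|[E|[E|E]]]; rewrite ?E ?F in h3 h5 h6 h7 h8 h9 h10;
  try move/(_ erefl): h6 => h6; try move/(_ erefl): h7 => h7; try move/(_ isT): h8 => h8;
  clear h1 h2; nlia.
Qed.

Lemma ar7a D S T : T + 126 = 42 * 7 -> S <= T -> D + 1 <= 7 ->
  D * (2 * 7 + 42) <= S + D * (2 * D + 2 * (7 - 1)) -> D <= 4.
Proof.
move=> h1 h2 h3 h4.
have : D = 0 \/ D = 1 \/ D = 2 \/ D = 3 \/ D = 4 \/ D = 5 \/ D = 6 by nlia.
case=> [E|[E|[E|[E|[E|[E|E]]]]]]; rewrite E in h4 *; [done|done|done|done|done|nlia|nlia].
Qed.

Lemma ar7b D S T : T + 126 = 42 * 7 -> S <= T -> 3 <= D -> D <= 4 ->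
  D * (2 * 7 + 42) <= S + D * (2 * D + 2 * 4) ->
  3 * S <= 2 * T + D * (D - 1) * D -> False.
Proof.
move=> h1 h2 h3 h4 h5 h6.
have : D = 3 \/ D = 4 by nlia.
case=> E; rewrite E in h5 h6; nlia.
Qed.

Ltac kill := repeat match goal with H : is_true (?a != ?b) |- _ =>
   let H' := fresh "H" in
   rewrite ?(negbTE H);
   assert (H' : (b == a) = false) by (rewrite eq_sym; exact: negbTE H);
   rewrite ?H'; clear H' H end.

Section S2.
Variable c : nat.
Variable C : {set word 24}.
Hypothesis CV : C \subset halfcube_V 24.
Hypothesis HE : forall u, u \in halfcube_V 24 ->
  #|[set y in halfcube_V 24 | halfcube_adj u y && (y \in C)]| = 20 * (u \in C) + c.
Variable x : word 24.
Hypothesis Hx : x \in C.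

Definition a2 (p q : 'I_24) : nat := fl (fl x p) q \in C.
Definition d i := \sum_(q : 'I_24) (q != i) * a2 i q.
Definition G i j p q : nat := fl (fl (fl (fl x i) j) p) q \in C.
Definition nij (i j k : 'I_24) : nat := (k != i) && (k != j).
Definition tp i j := \sum_(p : 'I_24) \sum_(q : 'I_24) (nij i j p * nij i j q * (p != q) * G i j p q).
Definition tau i := \sum_(j : 'I_24) (j != i) * tp i j.

Lemma a2C p q : a2 p q = a2 q p.
Proof. by rewrite /a2 flC. Qed.

Lemma a2K k : a2 k k = 1.
Proof. by rewrite /a2 flK Hx. Qed.

Lemma xV : x \in halfcube_V 24.
Proof. exact: (subsetP CV). Qed.

Lemma flflV u p q : u \in halfcube_V 24 -> fl (fl u p) q \in halfcube_V 24.
Proof. by rewrite !inE !wt_fl negbK. Qed.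

Lemma Epair i j : i != j -> tp i j + 2 + 2 * (d i + d j) = 2 * c + 44 * a2 i j.
Proof.
move=> ij.
have ji : j != i by rewrite eq_sym.
have uV := flflV i j xV.
have H := NB CV HE uV.
have W1 q : fl (fl (fl (fl x i) j) i) q = fl (fl x j) q.
  by apply/ffunP=> m; rewrite !flE; case: (x m); case: (m == i); case: (m == j); case: (m == q).
have W2 q : fl (fl (fl (fl x i) j) j) q = fl (fl x i) q.
  by apply/ffunP=> m; rewrite !flE; case: (x m); case: (m == i); case: (m == j); case: (m == q).
have W3 p : fl (fl (fl (fl x i) j) p) i = fl (fl x j) p.
  by apply/ffunP=> m; rewrite !flE; case: (x m); case: (m == i); case: (m == j); case: (m == p).
have W4 p : fl (fl (fl (fl x i) j) p) j = fl (fl x i) p.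
  by apply/ffunP=> m; rewrite !flE; case: (x m); case: (m == i); case: (m == j); case: (m == p).
have pw : forall p q, ((p != q) && (fl (fl (fl (fl x i) j) p) q \in C) : nat) =
   (p == i) * (q == j) + (p == j) * (q == i) + (p == i) * (nij i j q * a2 j q)
   + (p == j) * (nij i j q * a2 i q) + (q == i) * (nij i j p * a2 j p)
   + (q == j) * (nij i j p * a2 i p) + nij i j p * nij i j q * (p != q) * G i j p q.
  move=> p q; rewrite /nij /G /a2.
  case: (eqVneq p i) => [->|pi]; [|case: (eqVneq p j) => [->|pj]];
   (case: (eqVneq q i) => [->|qi]; [|case: (eqVneq q j) => [->|qj]]);
   rewrite ?W1 ?W2 ?W3 ?W4 ?flK ?Hx; kill;
   by rewrite ?eqxx /= ?mul1n ?muln1 ?mul0n ?muln0 ?add0n ?addn0 ?mulnb.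
set RHS := fun p q => (p == i) * (q == j) + (p == j) * (q == i) + (p == i) * (nij i j q * a2 j q)
   + (p == j) * (nij i j q * a2 i q) + (q == i) * (nij i j p * a2 j p)
   + (q == j) * (nij i j p * a2 i p) + nij i j p * nij i j q * (p != q) * G i j p q.
have H2 : \sum_(p : 'I_24) \sum_(q : 'I_24) RHS p q = 2 * (20 * a2 i j + c).
  rewrite /a2 -H; apply: eq_bigr => p _; apply: eq_bigr => q _; by rewrite pw.
have H3 : \sum_(p : 'I_24) \sum_(q : 'I_24) RHS p q = 1 + 1
   + \sum_q nij i j q * a2 j q + \sum_q nij i j q * a2 i q
   + \sum_q nij i j q * a2 j q + \sum_q nij i j q * a2 i q + tp i j.
  rewrite /RHS /=.
  under eq_bigr => p _ do rewrite !big_split /=.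
  rewrite !big_split /=.
  rewrite (L1 (fun q => (q == j) : nat)) (L1 (fun q => (q == i) : nat)) !sum1.
  rewrite (L1 (fun q => nij i j q * a2 j q)) (L1 (fun q => nij i j q * a2 i q)).
  by rewrite (L2 (fun p => nij i j p * a2 j p)) (L2 (fun p => nij i j p * a2 i p)).
have di : d i = a2 i j + \sum_q nij i j q * a2 i q.
  rewrite /d -(sum_eq1 (fun q => a2 i q) j) -big_split /=; apply: eq_bigr => q _.
  rewrite /nij; case: (eqVneq q j) => [->|qj]; first by rewrite ji /= mul1n ?muln0 ?addn0.
  by rewrite /= andbT add0n.
have dj : d j = a2 j i + \sum_q nij i j q * a2 j q.
  rewrite /d -(sum_eq1 (fun q => a2 j q) i) -big_split /=; apply: eq_bigr => q _.
  rewrite /nij; case: (eqVneq q i) => [->|qi]; first by rewrite ij /= mul1n ?muln0 ?addn0.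
  by rewrite /= ?andbT ?add0n.
rewrite a2C in dj.
move: H2 H3 di dj; nlia.
Qed.

Lemma sumd : \sum_i d i = 40 + 2 * c.
Proof.
have E := NB CV HE xV; rewrite Hx in E.
transitivity (2 * (20 * true + c)); last by rewrite muln1; nring.
rewrite -E; apply: eq_bigr => p _; apply: eq_bigr => q _.
by rewrite /a2 eq_sym mulnb.
Qed.

Lemma tauE i : tau i + 126 = 42 * c.
Proof.
have key : \sum_(j : 'I_24) ((j != i) * tp i j + 2 * (j != i) + 2 * ((j != i) * d i)
                + 2 * ((j != i) * d j))
         = \sum_(j : 'I_24) ((j != i) * (2 * c) + 44 * ((j != i) * a2 i j)).
  apply: eq_bigr => j _; case: (eqVneq j i) => [->|ji] /=.
    by rewrite !mul0n !muln0.
  rewrite eq_sym in ji; rewrite !mul1n -(Epair ji); nring.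
rewrite sum4 !sumMl sum2 cnt !cntk !sumMl in key.
have S := split_i d i; rewrite sumd in S.
move: key S; rewrite /tau -/(d i). set S1 := \sum_(j < 24) (j != i) * d j. set T1 := \sum_(j < 24) (j != i) * tp i j. nlia.
Qed.

Lemma a2b i j : a2 i j = 0 \/ a2 i j = 1.
Proof. by rewrite /a2; case: (_ \in C); [right|left]. Qed.

Lemma subsum i : \sum_j (j != i) * a2 i j * tp i j <= tau i.
Proof.
apply: leq_sum => j _; rewrite -mulnA leq_mul2l; case: (a2b i j) => ->.
  by rewrite mul0n orbT.
by rewrite mul1n leqnn orbT.
Qed.

Lemma LB i M : (forall j, j != i -> a2 i j = 1 -> d j <= M) ->
  d i * (2 * c + 42) <= \sum_j (j != i) * a2 i j * tp i j + d i * (2 * d i + 2 * M).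
Proof.
move=> HM.
have e1 : forall K, d i * K = \sum_j ((j != i) * a2 i j * K) by move=> K; rewrite sumMr.
rewrite !e1 -sum2 /=; apply: leq_sum => j _.
case: (eqVneq j i) => [_|ji] /=; first by rewrite !mul0n.
case: (a2b i j) => h; first by rewrite h !muln0 !mul0n.
have ij : i != j by rewrite eq_sym.
have E := Epair ij; rewrite h in E.
have hd := HM j ji h.
rewrite h !mul1n; nlia.
Qed.

Definition B i j p q := (j != i) * (nij i j p * nij i j q * (p != q) * G i j p q).

Lemma Bs12 i j p q : B i j p q = B i p j q.
Proof.
rewrite /B /nij /G.
have -> : fl (fl (fl (fl x i) j) p) q = fl (fl (fl (fl x i) p) j) q.
  by apply/ffunP=> m; rewrite !flE; case: (x m); case: (m == i); case: (m == j); case: (m == p); case: (m == q).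
rewrite -!mulnb [j == p]eq_sym [q == p]eq_sym [j == q]eq_sym; nring.
Qed.

Lemma Bs13 i j p q : B i j p q = B i q p j.
Proof.
rewrite /B /nij /G.
have -> : fl (fl (fl (fl x i) j) p) q = fl (fl (fl (fl x i) q) p) j.
  by apply/ffunP=> m; rewrite !flE; case: (x m); case: (m == i); case: (m == j); case: (m == p); case: (m == q).
rewrite -!mulnb [j == q]eq_sym; nring.
Qed.

Lemma tpB i j : (j != i) * tp i j = \sum_p \sum_q B i j p q.
Proof. by rewrite /tp -sumMl; apply: eq_bigr => p _; rewrite -sumMl. Qed.

Lemma ptw i j p q : (a2 i j + a2 i p + a2 i q) * B i j p q <= 2 * B i j p q +
   (j != i) * a2 i j * ((p != i) * a2 i p) * (p != j) * ((q != i) * a2 i q).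
Proof.
rewrite /B /nij /G /a2.
case: (j == i); case: (p == i); case: (q == i); case: (p == j); case: (q == j);
case: (p == q); case: (fl (fl x i) j \in C); case: (fl (fl x i) p \in C);
case: (fl (fl x i) q \in C); case: (fl (fl (fl (fl x i) j) p) q \in C); by [].
Qed.

Lemma triple i : 3 * \sum_j (j != i) * a2 i j * tp i j <= 2 * tau i + d i * (d i - 1) * d i.
Proof.
have X1 : \sum_j (j != i) * a2 i j * tp i j = \sum_j \sum_p \sum_q a2 i j * B i j p q.
  apply: eq_bigr => j _; rewrite [(j != i) * _]mulnC -mulnA tpB -sumMl.
  by apply: eq_bigr => p _; rewrite -sumMl.
have X2 : \sum_j \sum_p \sum_q a2 i j * B i j p q = \sum_j \sum_p \sum_q a2 i p * B i j p q.
  symmetry; rewrite swap12; apply: eq_bigr => p _; apply: eq_bigr => j _;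
  apply: eq_bigr => q _; by rewrite Bs12.
have X3 : \sum_j \sum_p \sum_q a2 i j * B i j p q = \sum_j \sum_p \sum_q a2 i q * B i j p q.
  symmetry; rewrite rev3; apply: eq_bigr => q _; apply: eq_bigr => p _;
  apply: eq_bigr => j _; by rewrite Bs13.
set a := fun k => (k != i) * a2 i k.
have T : \sum_j \sum_p \sum_q B i j p q = tau i.
  by rewrite /tau; apply: eq_bigr => j _; rewrite tpB.
have SE : \sum_j \sum_p \sum_q (a j * a p * (p != j) * a q) = d i * (d i - 1) * d i.
  transitivity (\sum_j (a j * (d i - 1) * d i)); last by rewrite sumMr sumMr.
  apply: eq_bigr => j _.
  transitivity (\sum_p ((a j * d i) * ((p != j) * a p))).
    apply: eq_bigr => p _; rewrite sumMl -/(d i); nring.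
  rewrite sumMl.
  have h := split_i a j; rewrite -/(d i) in h.
  rewrite /a in h *; case: (a2b i j) => h2; first by rewrite h2 !muln0 !mul0n.
  case: (eqVneq j i) => [_|ji]; first by rewrite !mul0n.
  rewrite h2 ji muln1 /= in h; rewrite h2 /= !mul1n; move: h.
  set Sg := \sum_(p < 24) _.
  move=> h; have -> : Sg = d i - 1 by rewrite h; nlia.
  by rewrite mulnC.
have : 3 * \sum_j (j != i) * a2 i j * tp i j =
  \sum_j \sum_p \sum_q ((a2 i j + a2 i p + a2 i q) * B i j p q).
  transitivity (\sum_j \sum_p \sum_q (a2 i j * B i j p q) +
     \sum_j \sum_p \sum_q (a2 i p * B i j p q) + \sum_j \sum_p \sum_q (a2 i q * B i j p q)).
    by rewrite -X2 -X3 X1; nring.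
  by rewrite -!sum3_2; do 3! (apply: eq_bigr => ? _); rewrite !mulnDl.
move=> ->.
apply: leq_trans (sum3_le (ptw i)) _.
rewrite sum3_2.
have T2 : \sum_j \sum_p \sum_q (2 * B i j p q) = 2 * tau i.
  rewrite -T -sumMl; apply: eq_bigr => j _; rewrite -sumMl; apply: eq_bigr => p _.
  by rewrite -sumMl.
have SE' : \sum_j \sum_p \sum_q ((j != i) * a2 i j * ((p != i) * a2 i p) * (p != j)
   * ((q != i) * a2 i q)) = d i * (d i - 1) * d i := SE.
by rewrite T2 SE'.
Qed.

Lemma noFull : c <= 7 -> (forall i, exists2 k, k != i & a2 i k = 0) -> False.
Proof.
move=> hc Hns.
have Dmax i : d i + 1 <= c.
  case: (Hns i) => k ki hk; have ik : i != k by rewrite eq_sym.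
  have := Epair ik; rewrite hk => E; nlia.
have big m : 24 * m < 40 + 2 * c -> exists i, m < d i.
  move=> H; case: (boolP [exists i, m < d i]) => [/existsP [i Hi]|/existsPn Hn].
    by exists i.
  exfalso; have : \sum_i d i <= \sum_(i : 'I_24) m.
    by apply: leq_sum => i _; rewrite leqNgt Hn.
  rewrite sumd sum_nat_const card_ord => H2; nlia.
have LBc i : d i * (2 * c + 42) <= \sum_j (j != i) * a2 i j * tp i j
                                   + d i * (2 * d i + 2 * (c - 1)).
  apply: LB => j _ _; move: (Dmax j) => dm; nlia.
have tE0 := tauE ord0.
case: (leqP c 2) => [h|h1]; first by nlia.
case: (eqVneq c 7) => [h7|n7]; last first.
  have h2 : c <= 6 by rewrite -ltnS ltn_neqAle n7 hc.
  have key i : (c = 3 -> 1 <= d i) -> (c = 4 -> 2 <= d i) -> (5 <= c -> 3 <= d i) -> False.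
    move=> k1 k2 k3; exact: (ar1 h1 h2 (tauE i) (subsum i) (Dmax i) k1 k2 k3 (LBc i) (triple i)).
  case: (eqVneq c 3) => [e|n3].
    have [|i Hi] := big 0; first by rewrite e.
    by apply: (key i) => // e'; rewrite e in e'.
  have h4 : 4 <= c by rewrite ltn_neqAle eq_sym n3 h1.
  case: (eqVneq c 4) => [e|n4].
    have [|i Hi] := big 1; first by rewrite e.
    by apply: (key i) => // e'; rewrite e in e'.
  have h5 : 5 <= c by rewrite ltn_neqAle eq_sym n4 h4.
  have [|i Hi] := big 2; first by nlia.
  apply: (key i) => // e'; by rewrite e' in h5.
have D4 j : d j <= 4.
  have t := tauE j; have l := LBc j; have dm := Dmax j; rewrite h7 in t l dm.
  exact: (ar7a t (subsum j) dm l).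
have [|i Hi] := big 2; first by nlia.
have t := tauE i; rewrite h7 in t.
have l := LB (M := 4) (i := i) (fun j _ _ => D4 j); rewrite h7 in l.
exact: (ar7b t (subsum i) Hi (D4 i) l (triple i)).
Qed.
End S2.


Lemma hd1 u k : hdist u (fl u k) = 1.
Proof.
rewrite /hdist -[RHS](cards1 k); apply: eq_card => m; rewrite !inE flE.
by case: (u m); case: (m == k).
Qed.

Lemma hd1inv u v : hdist u v == 1 -> exists k, u = fl v k.
Proof.
rewrite /hdist => /cards1P [k Hk]; exists k; apply/ffunP => m; rewrite flE.
have : (m \in [set m | u m != v m]) = (m \in [set k]) by rewrite Hk.
by rewrite !inE => <-; case: (u m); case: (v m).
Qed.

Theorem lemma7 (c : nat) (C : {set word 24}) :
  c <= 7 ->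
  perfect_coloring (halfcube_V 24) (@halfcube_adj 24) C (20 + c) (256 - c) c (276 - c) ->
  union_of_spheres C.
Proof.
move=> hc [C0 CP Hin Hout].
have CV : C \subset halfcube_V 24 := proper_sub CP.
have HE : forall u, u \in halfcube_V 24 ->
    #|[set y in halfcube_V 24 | halfcube_adj u y && (y \in C)]| = 20 * (u \in C) + c.
  move=> u uV; case: (boolP (u \in C)) => uC.
    by case: (Hin u uC) => -> _; rewrite muln1.
  have : u \in halfcube_V 24 :\: C by rewrite inE uC uV.
  by case/Hout => -> _; rewrite muln0.
have full : forall x, x \in C -> exists i, sphere (fl x i) \subset C.
  move=> x xC.
  case: (boolP [exists i, sphere (fl x i) \subset C]) => [/existsP [i Hi]|/existsPn H].
    by exists i.
  exfalso; apply: (noFull CV HE xC hc) => i.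
  case: (boolP [forall k, (k != i) ==> (fl (fl x i) k \in C)]) => [/forallP Hall|/forallPn [k Hk]].
    exfalso; move/negP: (H i); apply; apply/subsetP => u; rewrite inE => /hd1inv [k ->].
    case: (eqVneq k i) => [->|ki]; first by rewrite flK.
    by have := Hall k; rewrite ki.
  rewrite negb_imply in Hk; case/andP: Hk => ki nC.
  by exists k => //; rewrite /a2 (negbTE nC).
exists [set z | odd (wt z) && (sphere z \subset C)]; split.
  by move=> z; rewrite inE => /andP[].
apply/setP => u; apply/idP/bigcupP => [uC|[z]].
  have [i Hi] := full u uC.
  exists (fl u i); last by rewrite inE eq_sym hd1.
  have := subsetP CV u uC; rewrite !inE wt_fl Hi andbT; by [].
by rewrite inE => /andP[_ /subsetP]; apply.
Qed.
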